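(* Let $H$ be a monoid satisfying the ascending chain condition on principal ideals. Then the following hold: $1r\Rightarrow 0r$, $2r\Rightarrow 1r$, $2r\Leftrightarrow 3r$, $3r\Leftrightarrow 6r$, $6r\Leftrightarrow 5r$, $5r\Rightarrow 4r$, $5r\Rightarrow 5'r$, $4r\Rightarrow 4'r$, $1r\Rightarrow 1s$, $2r\Rightarrow 2s$, $5r\Rightarrow 5s$, $4r\Rightarrow 4s$, $2s\Rightarrow 5s$, $5's\Rightarrow 2s$.
   Context: A monoid means a commutative cancellative monoid (written multiplicatively); $H^{\ast}$ is its unit group, $\mathbb{N}=\{1,2,\dots\}$, $\mathbb{N}_0=\{0,1,2,\dots\}$. ACCP: every ascending chain of principal ideals of $H$ stabilizes. Elements are relatively prime ($a\perp b$) if all their common divisors are units. $\mathrm{Sqf}\,H$: elements not of the form $b^2c$ with $b\notin H^{\ast}$. $\mathrm{Gpr}\,H$: elements $r$ such that $r\mid b^n$ ($n\in\mathbb{N}$) implies $r\mid b$. Let $S$ stand for $\mathrm{Sqf}\,H$ (suffix s) or $\mathrm{Gpr}\,H$ (suffix r). For every $a\in H$: (0) there are $n\in\mathbb{N}$, $s_1,\dots,s_n\in S$ with $a=s_1\cdots s_n$; (1) there are $n\in\mathbb{N}$, $s_1,\dots,s_n\in S$ with $s_i\perp s_j$ for $i\ne j$ and $a=s_1s_2^2\cdots s_n^n$; (2) there are $n\in\mathbb{N}$, $s_1,\dots,s_n\in S$ with $s_i\mid s_{i+1}$ ($i<n$) and $a=s_1\cdots s_n$; (3) there are $n\in\mathbb{N}_0$,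 $s_0,\dots,s_n\in S$ with $a=s_0s_1^2s_2^{2^2}\cdots s_n^{2^n}$; (4) there are $b\in H$, $c\in S$ with $b\perp c$, $a=bc$, and some $d\in S$ with $d^2\mid b$ and $b\mid d^n$ for some $n\in\mathbb{N}$; (4') there are $b\in H$, $c\in S$ with $b\perp c$, $a=bc$, and for every $d\in S$, $d\mid b$ implies $d^2\mid b$; (5) there are $b\in H$, $c\in S$ with $a=bc$ and $a\mid c^n$ for some $n\in\mathbb{N}$; (5') there are $b\in H$, $c\in S$ with $a=bc$ and for every $d\in S$, $d\mid a$ implies $d\mid c$; (6) there are $b\in H$, $c\in S$ with $a=b^2c$. Condition $ks$ (resp. $kr$) is $(k)$ with $S=\mathrm{Sqf}\,H$ (resp. $S=\mathrm{Gpr}\,H$). *)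

(* Defs.v *)
From Stdlib Require Import Arith.

Record CCMonoid := {
  mcar :> Type;
  mmul : mcar -> mcar -> mcar;
  mone : mcar;
  mmulA : forall x y z, mmul x (mmul y z) = mmul (mmul x y) z;
  mmulC : forall x y, mmul x y = mmul y x;
  mmul1 : forall x, mmul mone x = x;
  mcancel : forall a b c, mmul a b = mmul a c -> b = c
}.

Arguments mmul {_} _ _.
Arguments mone {_}.

Section Defs.
Variable H : CCMonoid.

Definition unit (u : H) : Prop := exists v : H, mmul u v = mone.
Definition dvd (a b : H) : Prop := exists c : H, b = mmul a c.

Fixpoint pw (x : H) (n : nat) : H :=
  match n with 0 => mone | S k => mmul (pw x k) x end.

Fixpoint prod1n (f : nat -> H) (n : nat) : H :=
  match n with 0 => mone | S k => mmul (prod1n f k) (f (S k)) end.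

Definition ACCP : Prop :=
  forall f : nat -> H, (forall n, dvd (f (S n)) (f n)) ->
    exists N, forall n, N <= n -> dvd (f N) (f n).

Definition relprime (a b : H) : Prop :=
  forall d, dvd d a -> dvd d b -> unit d.

Definition Sqf (s : H) : Prop :=
  ~ exists b c : H, ~ unit b /\ s = mmul (pw b 2) c.

Definition Gpr (r : H) : Prop :=
  forall (b : H) (n : nat), 1 <= n -> dvd r (pw b n) -> dvd r b.

Variable P : H -> Prop.

Definition cond0 (a : H) : Prop :=
  exists (n : nat) (s : nat -> H), 1 <= n /\
    (forall i, 1 <= i <= n -> P (s i)) /\ a = prod1n s n.

Definition cond1 (a : H) : Prop :=
  exists (n : nat) (s : nat -> H), 1 <= n /\
    (forall i, 1 <= i <= n -> P (s i)) /\
    (forall i j, 1 <= i <= n -> 1 <= j <= n -> i <> j -> relprime (s i) (s j)) /\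
    a = prod1n (fun i => pw (s i) i) n.

Definition cond2 (a : H) : Prop :=
  exists (n : nat) (s : nat -> H), 1 <= n /\
    (forall i, 1 <= i <= n -> P (s i)) /\
    (forall i, 1 <= i < n -> dvd (s i) (s (S i))) /\
    a = prod1n s n.

Definition cond3 (a : H) : Prop :=
  exists (n : nat) (s : nat -> H),
    (forall i, 0 <= i <= n -> P (s i)) /\
    a = mmul (s 0) (prod1n (fun i => pw (s i) (2 ^ i)) n).

Definition cond4 (a : H) : Prop :=
  exists b c : H, P c /\ relprime b c /\ a = mmul b c /\
    exists d : H, P d /\ dvd (pw d 2) b /\ exists n, 1 <= n /\ dvd b (pw d n).

Definition cond4' (a : H) : Prop :=
  exists b c : H, P c /\ relprime b c /\ a = mmul b c /\
    forall d : H, P d -> dvd d b -> dvd (pw d 2) b.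

Definition cond5 (a : H) : Prop :=
  exists b c : H, P c /\ a = mmul b c /\ exists n, 1 <= n /\ dvd a (pw c n).

Definition cond5' (a : H) : Prop :=
  exists b c : H, P c /\ a = mmul b c /\
    forall d : H, P d -> dvd d a -> dvd d c.

Definition cond6 (a : H) : Prop :=
  exists b c : H, P c /\ a = mmul (pw b 2) c.

End Defs.

Arguments unit {H}. Arguments dvd {H}. Arguments pw {H}. Arguments prod1n {H}.
Arguments relprime {H}. Arguments Sqf {H}. Arguments Gpr {H}.

Definition holds (H : CCMonoid) (c : forall H : CCMonoid, (H -> Prop) -> H -> Prop)
  (S : H -> Prop) : Prop := forall a : H, c H S a.

(* Main.v *)
Require Import Defs.
From Stdlib Require Import Arith Lia Classical IndefiniteDescription.

Local Infix "**" := mmul (at level 40, left associativity).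
Arguments mmulA {_}. Arguments mmulC {_}. Arguments mmul1 {_}. Arguments mcancel {_}.

Lemma mmul1r {H : CCMonoid} (x : H) : x ** mone = x.
Proof. rewrite mmulC; apply mmul1. Qed.
Lemma mmulAC {H : CCMonoid} (x y z : H) : x ** y ** z = x ** z ** y.
Proof. rewrite <- !mmulA, (mmulC y). reflexivity. Qed.
Lemma mmulCA {H : CCMonoid} (x y z : H) : x ** (y ** z) = y ** (x ** z).
Proof. rewrite !mmulA, (mmulC x). reflexivity. Qed.
Lemma mcancelr {H : CCMonoid} (a b c : H) : a ** c = b ** c -> a = b.
Proof. rewrite (mmulC a), (mmulC b). apply mcancel. Qed.

Lemma dvd_refl {H : CCMonoid} (x : H) : dvd x x.
Proof. exists mone. now rewrite mmul1r. Qed.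
Lemma dvd_trans {H : CCMonoid} (x y z : H) : dvd x y -> dvd y z -> dvd x z.
Proof. intros [a ->] [b ->]. exists (a ** b). now rewrite mmulA. Qed.
Lemma dvd_mulr {H : CCMonoid} (x y : H) : dvd x (x ** y).
Proof. now exists y. Qed.
Lemma dvd_mull {H : CCMonoid} (x y : H) : dvd y (x ** y).
Proof. exists x. apply mmulC. Qed.
Lemma dvd_mul {H : CCMonoid} (a b c d : H) : dvd a b -> dvd c d -> dvd (a ** c) (b ** d).
Proof. intros [x ->] [y ->]. exists (x ** y).
  rewrite !mmulA. f_equal. rewrite mmulAC. reflexivity. Qed.
Lemma dvd_mul_l {H : CCMonoid} (a b c : H) : dvd a b -> dvd a (b ** c).
Proof. intros [x ->]. exists (x ** c). now rewrite mmulA. Qed.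
Lemma dvd_mul_r {H : CCMonoid} (a b c : H) : dvd a c -> dvd a (b ** c).
Proof. rewrite mmulC. apply dvd_mul_l. Qed.
Lemma dvd_one {H : CCMonoid} (x : H) : dvd mone x.
Proof. exists x. now rewrite mmul1. Qed.
Lemma dvd_mulc {H : CCMonoid} (a b c : H) : dvd (a ** b) (a ** c) -> dvd b c.
Proof. intros [x Hx]. exists x. apply (mcancel a). now rewrite mmulA. Qed.
Lemma dvd_of_mul {H : CCMonoid} (a b c : H) : dvd (a ** b) c -> dvd a c.
Proof. intro h. eapply dvd_trans; [apply dvd_mulr|exact h]. Qed.
Lemma dvd_of_mul' {H : CCMonoid} (a b c : H) : dvd (a ** b) c -> dvd b c.
Proof. intro h. eapply dvd_trans; [apply dvd_mull|exact h]. Qed.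

Lemma unit_dvd1 {H : CCMonoid} (u : H) : unit u <-> dvd u mone.
Proof. split; intros [v h]; exists v; auto. Qed.
Lemma unit_dvd {H : CCMonoid} (u x : H) : unit u -> dvd u x.
Proof. intro h. apply unit_dvd1 in h. eapply dvd_trans; [exact h|apply dvd_one]. Qed.
Lemma dvd_unit {H : CCMonoid} (x u : H) : dvd x u -> unit u -> unit x.
Proof. intros h1 h2. apply unit_dvd1. apply unit_dvd1 in h2. eapply dvd_trans; eauto. Qed.
Lemma unit_one {H : CCMonoid} : unit (@mone H).
Proof. exists mone. apply mmul1. Qed.
Lemma unit_mul_l {H : CCMonoid} (a b : H) : unit (a ** b) -> unit a.
Proof. intro h. eapply dvd_unit; [apply dvd_mulr|exact h]. Qed.
Lemma unit_mul_r {H : CCMonoid} (a b : H) : unit (a ** b) -> unit b.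
Proof. intro h. eapply dvd_unit; [apply dvd_mull|exact h]. Qed.
Lemma dvd_self_mul {H : CCMonoid} (a b : H) : dvd (a ** b) a -> unit b.
Proof. intros [x hx]. exists x. apply (mcancel a). rewrite mmulA, <- hx. now rewrite mmul1r. Qed.

Lemma pw_add {H : CCMonoid} (x : H) m n : pw x (m + n) = pw x m ** pw x n.
Proof. induction n as [|n IH]; simpl. now rewrite Nat.add_0_r, mmul1r.
  rewrite Nat.add_succ_r; simpl. now rewrite IH, mmulA. Qed.
Lemma pw_1 {H : CCMonoid} (x : H) : pw x 1 = x.
Proof. simpl. apply mmul1. Qed.
Lemma pw_2 {H : CCMonoid} (x : H) : pw x 2 = x ** x.
Proof. simpl. now rewrite mmul1. Qed.
Lemma pw_mulx {H : CCMonoid} (x y : H) n : pw (x ** y) n = pw x n ** pw y n.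
Proof. induction n as [|n IH]; simpl. now rewrite mmul1.
  rewrite IH. rewrite !mmulA. f_equal. rewrite mmulAC. reflexivity. Qed.
Lemma pw_mul {H : CCMonoid} (x : H) m n : pw x (m * n) = pw (pw x m) n.
Proof. induction n as [|n IH]; simpl. now rewrite Nat.mul_0_r.
  rewrite Nat.mul_succ_r, pw_add, IH. reflexivity. Qed.
Lemma pw_one {H : CCMonoid} n : pw (@mone H) n = mone.
Proof. induction n; simpl; auto. now rewrite IHn, mmul1. Qed.
Lemma pw_dvd {H : CCMonoid} (x y : H) n : dvd x y -> dvd (pw x n) (pw y n).
Proof. intros [c ->]. rewrite pw_mulx. apply dvd_mulr. Qed.
Lemma dvd_pw {H : CCMonoid} (x : H) n : 1 <= n -> dvd x (pw x n).
Proof. intro h. destruct n. lia. simpl. apply dvd_mull. Qed.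
Lemma pw_le {H : CCMonoid} (x : H) m n : m <= n -> dvd (pw x m) (pw x n).
Proof. intro h. replace n with (m + (n - m)) by lia. rewrite pw_add. apply dvd_mulr. Qed.

Lemma Gpr_dvd {H : CCMonoid} (x r : H) : Gpr r -> dvd x r -> Gpr x.
Proof. intros hr [y ->] b n hn hx.
  assert (h : dvd (x ** y) (b ** y)).
  { apply hr with n; auto. rewrite pw_mulx. apply dvd_mul; auto.
    apply dvd_pw; auto. }
  rewrite (mmulC x), (mmulC b) in h. apply dvd_mulc in h. exact h. Qed.
Lemma Gpr_unit {H : CCMonoid} (u : H) : unit u -> Gpr u.
Proof. intros h b n _ _. apply unit_dvd; auto. Qed.
Lemma Gpr_sq {H : CCMonoid} (r d : H) : Gpr r -> dvd (d ** d) r -> unit d.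
Proof. intros hr [c hc].
  assert (h : dvd r (d ** c)).
  { apply hr with 2; auto. exists c. rewrite pw_2, hc.
    rewrite !mmulA. f_equal. rewrite mmulAC. reflexivity. }
  rewrite hc, <- mmulA in h.
  apply dvd_mulc in h. rewrite <- (mmul1r c) in h at 2. rewrite mmulC in h. apply dvd_mulc in h.
  apply unit_dvd1. exact h. Qed.
Lemma Gpr_Sqf {H : CCMonoid} (r : H) : Gpr r -> Sqf r.
Proof. intros hr [b [c [hb e]]]. apply hb. apply (Gpr_sq r); auto.
  rewrite e, pw_2. apply dvd_mulr. Qed.
Lemma Sqf_unit {H : CCMonoid} (u : H) : unit u -> Sqf u.
Proof. intros hu [b [c [hb e]]]. apply hb. rewrite e, pw_2 in hu.
  apply unit_mul_l, unit_mul_l in hu. exact hu. Qed.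

Definition pdiv {H : CCMonoid} (x y : H) : Prop := dvd x y /\ ~ dvd y x.

Lemma wf_pdiv {H : CCMonoid} (hacc : ACCP H) : well_founded (@pdiv H).
Proof.
  intro y0. apply NNPP. intro Hn.
  assert (step : forall y : {y : H | ~ Acc pdiv y},
     {x : {y : H | ~ Acc pdiv y} | pdiv (proj1_sig x) (proj1_sig y)}).
  { intros [y Hy]. apply constructive_indefinite_description.
    apply NNPP; intro Hc. apply Hy. constructor. intros x Hx. apply NNPP.
    intro Hax. apply Hc. exists (exist _ x Hax). exact Hx. }
  set (g := fun y => proj1_sig (step y)).
  set (f := fun n => proj1_sig (Nat.iter n g (exist _ y0 Hn))).
  destruct (hacc f) as [N HN].
  - intro n. unfold f; simpl. exact (proj1 (proj2_sig (step _))).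
  - apply (proj2 (proj2_sig (step (Nat.iter N g (exist _ y0 Hn))))).
    apply (HN (S N)); lia.
Qed.

Lemma prod1n_ext {H : CCMonoid} (f g : nat -> H) n :
  (forall i, 1 <= i <= n -> f i = g i) -> prod1n f n = prod1n g n.
Proof. induction n as [|n IH]; intro h; simpl; auto.
  rewrite IH, h; auto; try lia. intros; apply h; lia. Qed.
Lemma prod1n_mul {H : CCMonoid} (f g : nat -> H) n :
  prod1n (fun i => f i ** g i) n = prod1n f n ** prod1n g n.
Proof. induction n as [|n IH]; simpl. now rewrite mmul1.
  rewrite IH. rewrite !mmulA. f_equal. rewrite mmulAC. reflexivity. Qed.
Lemma prod1n_shift {H : CCMonoid} (f : nat -> H) n :
  prod1n f (S n) = f 1 ** prod1n (fun i => f (S i)) n.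
Proof. induction n as [|n IH]. simpl. now rewrite mmul1, mmul1r.
  change (prod1n f (S (S n))) with (prod1n f (S n) ** f (S (S n))).
  rewrite IH. simpl. now rewrite mmulA. Qed.
Lemma prod1n_pw {H : CCMonoid} (f : nat -> H) k n :
  prod1n (fun i => pw (f i) k) n = pw (prod1n f n) k.
Proof. induction n as [|n IH]; simpl. now rewrite pw_one.
  now rewrite IH, pw_mulx. Qed.
Lemma prod1n_dvd_mono {H : CCMonoid} (f g : nat -> H) n :
  (forall i, 1 <= i <= n -> dvd (f i) (g i)) -> dvd (prod1n f n) (prod1n g n).
Proof. induction n as [|n IH]; intro h; simpl. apply dvd_refl.
  apply dvd_mul. apply IH; intros; apply h; lia. apply h; lia. Qed.
Lemma dvd_prod1n {H : CCMonoid} (f : nat -> H) n i :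
  1 <= i <= n -> dvd (f i) (prod1n f n).
Proof. induction n as [|n IH]; intro h; simpl. lia.
  destruct (Nat.eq_dec i (S n)) as [->|ne]. apply dvd_mull.
  apply dvd_mul_l. apply IH; lia. Qed.
Lemma prod1n_dvd_pw {H : CCMonoid} (f : nat -> H) c n :
  (forall i, 1 <= i <= n -> dvd (f i) c) -> dvd (prod1n f n) (pw c n).
Proof. intro h. induction n as [|n IH]; simpl. apply dvd_refl.
  apply dvd_mul. apply IH; intros; apply h; lia. apply h; lia. Qed.
Lemma prod1n_pair {H : CCMonoid} (f : nat -> H) n i j :
  1 <= i <= n -> 1 <= j <= n -> i <> j -> dvd (f i ** f j) (prod1n f n).
Proof. induction n as [|n IH]; intros hi hj ne; simpl. lia.
  destruct (Nat.eq_dec j (S n)) as [->|nej].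
  - apply dvd_mul. apply dvd_prod1n; lia. apply dvd_refl.
  - destruct (Nat.eq_dec i (S n)) as [->|nei].
    + rewrite mmulC. apply dvd_mul. apply dvd_prod1n; lia. apply dvd_refl.
    + apply dvd_mul_l. apply IH; lia. Qed.
Lemma prod1n_concat {H : CCMonoid} (f g : nat -> H) m k :
  prod1n (fun i => if i <=? m then f i else g (i - m)) (m + k) = prod1n f m ** prod1n g k.
Proof. induction k as [|k IH]; cbn [prod1n].
  - rewrite Nat.add_0_r, mmul1r. apply prod1n_ext. intros i hi.
    destruct (Nat.leb_spec i m); auto; lia.
  - rewrite Nat.add_succ_r. cbn [prod1n]. rewrite IH, mmulA. f_equal.
    destruct (Nat.leb_spec (S (m + k)) m). lia. f_equal. lia. Qed.

Lemma mmul4 {H : CCMonoid} (a b c d : H) : a ** b ** (c ** d) = a ** c ** (b ** d).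
Proof. rewrite !mmulA. f_equal. rewrite mmulAC. reflexivity. Qed.

Lemma chain_layers {H : CCMonoid} (s : nat -> H) n :
  (forall i, 1 <= i < S n -> dvd (s i) (s (S i))) ->
  exists u, prod1n s (S n) = prod1n (fun i => pw (u i) i) (S n) /\ prod1n u (S n) = s (S n).
Proof.
  induction n as [|n IH]; intro hc.
  - exists (fun _ => s 1). simpl. now rewrite !mmul1.
  - destruct IH as [u [e1 e2]]. intros; apply hc; lia.
    destruct (hc (S n)) as [t ht]. lia.
    pose (v := fun i => match i with S (S k) => u (S k) | _ => t end).
    exists v.
    split.
    + rewrite (prod1n_shift (fun i => pw (v i) i) (S n)). cbv beta.
      rewrite (prod1n_ext (fun i => pw (v (S i)) (S i))
                          (fun i => pw (u i) i ** u i)).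
      2:{ intros i hi. destruct i. lia. reflexivity. }
      rewrite prod1n_mul, <- e1, e2.
      change (prod1n s (S (S n))) with (prod1n s (S n) ** s (S (S n))).
      rewrite ht. change (v 1) with t. rewrite pw_1, mmulA. apply mmulC.
    + rewrite (prod1n_shift v (S n)). cbv beta.
      rewrite (prod1n_ext (fun i => v (S i)) u).
      2:{ intros i hi. destruct i. lia. reflexivity. }
      rewrite e2, ht. apply mmulC.
Qed.

Lemma sq_split {H : CCMonoid} (u : nat -> H) n :
  exists e f, prod1n (fun i => pw (u i) i) n = pw e 2 ** f /\ dvd f (prod1n u n).
Proof.
  induction n as [|n IH].
  - exists mone, mone. simpl. split. now rewrite !mmul1. apply dvd_refl.
  - destruct IH as [e [f [e1 e2]]].
    change (prod1n (fun i => pw (u i) i) (S n)) with (prod1n (fun i => pw (u i) i) n ** pw (u (S n)) (S n)).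
    change (prod1n u (S n)) with (prod1n u n ** u (S n)).
    rewrite e1. remember (u (S n)) as x. clear Heqx. remember (S n) as k. clear Heqk.
    assert (hk : k = k / 2 * 2 + k mod 2) by (rewrite Nat.mul_comm; apply Nat.div_mod_eq).
    exists (e ** pw x (k / 2)), (f ** pw x (k mod 2)). split.
    + replace (pw x k) with (pw x (k/2*2 + k mod 2)) by (rewrite <- hk; reflexivity).
      rewrite pw_add, pw_mul, pw_mulx. apply mmul4.
    + apply dvd_mul; auto.
      rewrite <- (pw_1 x) at 2. apply pw_le.
      pose proof (Nat.mod_upper_bound k 2). lia.
Qed.

Lemma unit_mul {H : CCMonoid} (a b : H) : unit a -> unit b -> unit (a ** b).
Proof. intros [x hx] [y hy]. exists (x ** y). rewrite mmul4, hx, hy. apply mmul1. Qed.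
Lemma unit_pw {H : CCMonoid} (a : H) n : unit a -> unit (pw a n).
Proof. intro h. induction n; simpl. apply unit_one. now apply unit_mul. Qed.
Lemma unit_mul_dvd {H : CCMonoid} (u c : H) : unit u -> dvd (u ** c) c.
Proof. intros [v hv]. exists v. rewrite mmulAC, hv. now rewrite mmul1. Qed.
Lemma sq_dvd_unit {H : CCMonoid} (b c : H) : dvd (pw b 2 ** c) b -> unit b.
Proof. intro h. rewrite pw_2, <- mmulA in h. apply dvd_self_mul in h.
  now apply unit_mul_l in h. Qed.
Lemma Gpr_sq_unit {H : CCMonoid} (b c : H) : unit b -> Gpr c -> Gpr (pw b 2 ** c).
Proof. intros hb hc. apply (Gpr_dvd _ c); auto. apply unit_mul_dvd. now apply unit_pw. Qed.

Lemma chain_dvd {H : CCMonoid} (s : nat -> H) n :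
  (forall i, 1 <= i < n -> dvd (s i) (s (S i))) -> forall i, 1 <= i <= n -> dvd (s i) (s n).
Proof. induction n as [|n IH]; intros hc i hi. lia.
  destruct (Nat.eq_dec i (S n)) as [->|ne]. apply dvd_refl.
  eapply dvd_trans. apply IH. intros; apply hc; lia. lia. apply hc; lia. Qed.

Lemma cond2_single {H : CCMonoid} (P : H -> Prop) x : P x -> cond2 H P x.
Proof. intro h. exists 1, (fun _ => x). repeat split; auto; try lia.
  simpl. now rewrite mmul1. Qed.

Lemma cond2_extend {H : CCMonoid} (P : H -> Prop) b c :
  cond2 H P b -> P c -> (forall n s, 1 <= n -> b = prod1n s n -> P (s n) -> dvd (s n) c) ->
  cond2 H P (b ** c).
Proof.
  intros [n [s [hn [hP [hc e]]]]] hPc hdiv.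
  exists (S n), (fun i => if i <=? n then s i else c). repeat split.
  - lia.
  - intros i hi. destruct (Nat.leb_spec i n). apply hP; lia. auto.
  - intros i hi. destruct (Nat.leb_spec i n); destruct (Nat.leb_spec (S i) n); try lia.
    apply hc; lia. assert (i = n) by lia. subst i. apply hdiv; auto.
  - cbn [prod1n]. destruct (Nat.leb_spec (S n) n). lia. rewrite e. f_equal.
    apply prod1n_ext. intros i hi. destruct (Nat.leb_spec i n); auto; lia.
Qed.

Lemma L_5_2 {H : CCMonoid} (hacc : ACCP H) :
  holds H cond5 (@Gpr H) -> holds H cond2 (@Gpr H).
Proof.
  intros h5 x. induction x as [x IH] using (well_founded_ind (wf_pdiv hacc)).
  destruct (h5 x) as [b [c [hc [e [m [hm hd]]]]]].
  destruct (classic (unit c)) as [uc|nuc].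
  - apply cond2_single. apply Gpr_unit. eapply dvd_unit. exact hd. now apply unit_pw.
  - assert (pb : pdiv b x).
    { split. rewrite e. apply dvd_mulr. intro h. apply nuc. rewrite e in h.
      eapply dvd_self_mul. exact h. }
    rewrite e. apply cond2_extend; auto.
    intros n s hn eb hs. apply (hs c m); auto.
    eapply dvd_trans; [|exact hd]. rewrite e, eb. apply dvd_mul_l.
    apply dvd_prod1n. lia.
Qed.

Lemma L_2_5 {H : CCMonoid} (P : H -> Prop) a : cond2 H P a -> cond5 H P a.
Proof.
  intros [n [s [hn [hP [hc e]]]]].
  destruct n as [|n']. lia.
  exists (prod1n s n'), (s (S n')). repeat split. apply hP; lia. exact e.
  exists (S n'). split. lia. rewrite e. apply prod1n_dvd_pw.
  apply chain_dvd; auto.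
Qed.

Lemma L_2_layers {H : CCMonoid} (a : H) : cond2 H Gpr a ->
  exists n u, 1 <= n /\ a = prod1n (fun i => pw (u i) i) n /\ Gpr (prod1n u n).
Proof.
  intros [n [s [hn [hP [hc e]]]]].
  destruct n as [|n']. lia.
  destruct (chain_layers s n' hc) as [u [e1 e2]].
  exists (S n'), u. split. lia. split. congruence. rewrite e2. apply hP. lia.
Qed.

Lemma L_2_1 {H : CCMonoid} (a : H) : cond2 H Gpr a -> cond1 H Gpr a.
Proof.
  intro h. destruct (L_2_layers a h) as [n [u [hn [e hg]]]].
  exists n, u. repeat split; auto.
  - intros i hi. apply (Gpr_dvd _ _ hg). apply dvd_prod1n; auto.
  - intros i j hi hj ne d di dj. apply (Gpr_sq _ _ hg).
    eapply dvd_trans. apply dvd_mul; [exact di|exact dj]. apply prod1n_pair; auto.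
Qed.

Lemma L_2_6 {H : CCMonoid} (a : H) : cond2 H Gpr a -> cond6 H Gpr a.
Proof.
  intro h. destruct (L_2_layers a h) as [n [u [hn [e hg]]]].
  destruct (sq_split u n) as [b [c [e1 e2]]].
  exists b, c. split. eapply Gpr_dvd; eauto. congruence.
Qed.

Lemma L_3_6 {H : CCMonoid} (P : H -> Prop) a : cond3 H P a -> cond6 H P a.
Proof.
  intros [n [s [hP e]]].
  exists (prod1n (fun i => pw (s i) (2 ^ (i - 1))) n), (s 0). split. apply hP; lia.
  rewrite e, mmulC. f_equal. rewrite <- prod1n_pw. apply prod1n_ext.
  intros i hi. rewrite <- pw_mul. f_equal.
  destruct i. lia. rewrite Nat.pow_succ_r'. simpl (S i - 1). rewrite Nat.sub_0_r. lia.
Qed.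

Lemma L_6_3 {H : CCMonoid} (hacc : ACCP H) :
  holds H cond6 (@Gpr H) -> holds H cond3 (@Gpr H).
Proof.
  intros h6 x. induction x as [x IH] using (well_founded_ind (wf_pdiv hacc)).
  destruct (h6 x) as [b [c [hc e]]].
  destruct (classic (unit b)) as [ub|nub].
  - exists 0, (fun _ => x). split. intros; subst; now apply Gpr_sq_unit.
    simpl. now rewrite mmul1r.
  - assert (pb : pdiv b x).
    { split. rewrite e, pw_2, <- mmulA. apply dvd_mulr.
      intro h. apply nub. rewrite e in h. eapply sq_dvd_unit. exact h. }
    destruct (IH b pb) as [n [s [hs eb]]].
    exists (S n), (fun i => match i with 0 => c | S k => s k end). split.
    + intros i hi. destruct i; auto. apply hs; lia.
    + rewrite e, mmulC. f_equal.
      rewrite (prod1n_shift (fun i => pw match i with 0 => c | S k => s k end (2 ^ i)) n).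
      cbv beta.
      rewrite (prod1n_ext _ (fun i => pw (pw (s i) (2 ^ i)) 2)).
      2:{ intros i hi. rewrite <- pw_mul. f_equal. rewrite Nat.pow_succ_r'. lia. }
      rewrite prod1n_pw, eb, pw_mulx. f_equal.
Qed.

Definition rad {H : CCMonoid} (x : H) : Prop :=
  exists c, Gpr c /\ dvd c x /\ exists n, 1 <= n /\ dvd x (pw c n).

Lemma L_6_rad {H : CCMonoid} (hacc : ACCP H) :
  holds H cond6 (@Gpr H) -> forall x : H, rad x.
Proof.
  intros h6 x. induction x as [x IH] using (well_founded_ind (wf_pdiv hacc)).
  destruct (h6 x) as [b [c [hc e]]].
  destruct (classic (unit b)) as [ub|nub].
  - exists x. split. rewrite e. now apply Gpr_sq_unit. split. apply dvd_refl.
    exists 1. split. lia. rewrite pw_1. apply dvd_refl.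
  - assert (pb : pdiv b x).
    { split. rewrite e, pw_2, <- mmulA. apply dvd_mulr.
      intro h. apply nub. rewrite e in h. eapply sq_dvd_unit. exact h. }
    destruct (IH b pb) as [g [hg [gb [m [hm bg]]]]].
    assert (pgc : pdiv (g ** c) x).
    { split. rewrite e, pw_2. apply dvd_mul; auto. apply dvd_mul_r; auto. apply dvd_refl.
      intro h. apply nub. assert (h2 : dvd x (b ** c)).
      { eapply dvd_trans. exact h. apply dvd_mul; auto. apply dvd_refl. }
      rewrite e, pw_2, <- mmulA, (mmulC b c), (mmulC b (c ** b)), <- mmulA in h2.
      apply dvd_mulc in h2. eapply dvd_self_mul. exact h2. }
    destruct (IH _ pgc) as [h [hh [hd [k [hk gch]]]]].
    exists h. split; auto. split. eapply dvd_trans. exact hd. apply proj1 in pgc. exact pgc.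
    exists (k * (m + m)). split. lia. rewrite pw_mul.
    eapply dvd_trans; [|apply pw_dvd; exact gch].
    rewrite e, pw_mulx, pw_add. apply dvd_mul. rewrite pw_2. apply dvd_mul; auto.
    apply dvd_pw. lia.
Qed.

Lemma L_6_5 {H : CCMonoid} (hacc : ACCP H) :
  holds H cond6 (@Gpr H) -> holds H cond5 (@Gpr H).
Proof.
  intros h6 x. destruct (L_6_rad hacc h6 x) as [c [hc [[b e] hn]]].
  exists b, c. repeat split; auto. rewrite e. apply mmulC.
Qed.

Definition prodP {H : CCMonoid} (P : H -> Prop) (a : H) : Prop :=
  exists m t, (forall i, 1 <= i <= m -> P (t i)) /\ a = prod1n t m.

Lemma prodP_one {H : CCMonoid} (P : H -> Prop) : prodP P mone.
Proof. exists 0, (fun _ => mone). split; auto. intros; lia. Qed.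
Lemma prodP_mul {H : CCMonoid} (P : H -> Prop) a b : prodP P a -> prodP P b -> prodP P (a ** b).
Proof. intros [m [t [ht ->]]] [k [t' [ht' ->]]].
  exists (m + k), (fun i => if i <=? m then t i else t' (i - m)). split.
  - intros i hi. destruct (Nat.leb_spec i m). apply ht; lia. apply ht'; lia.
  - symmetry. apply prod1n_concat. Qed.
Lemma prodP_single {H : CCMonoid} (P : H -> Prop) x : P x -> prodP P x.
Proof. intro h. exists 1, (fun _ => x). split; auto. simpl. now rewrite mmul1. Qed.
Lemma prodP_pw {H : CCMonoid} (P : H -> Prop) x k : P x -> prodP P (pw x k).
Proof. intro h. induction k; simpl. apply prodP_one. apply prodP_mul; auto. now apply prodP_single. Qed.
Lemma prodP_prod {H : CCMonoid} (P : H -> Prop) f n :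
  (forall i, 1 <= i <= n -> prodP P (f i)) -> prodP P (prod1n f n).
Proof. induction n; intro h; simpl. apply prodP_one. apply prodP_mul.
  apply IHn; intros; apply h; lia. apply h; lia. Qed.

Lemma L_1_0 {H : CCMonoid} (a : H) : cond1 H Gpr a -> cond0 H Gpr a.
Proof.
  intros [n [s [hn [hP [_ e]]]]].
  assert (hp : prodP Gpr a).
  { rewrite e. apply prodP_prod. intros i hi. apply prodP_pw. auto. }
  destruct hp as [m [t [ht et]]].
  destruct m as [|m'].
  - exists 1, (fun _ => mone). repeat split; auto. intros; apply Gpr_unit, unit_one.
    rewrite et. simpl. now rewrite mmul1.
  - exists (S m'), t. repeat split; auto. lia.
Qed.

Lemma L_5_4 {H : CCMonoid} (hacc : ACCP H) :
  holds H cond5 (@Gpr H) -> holds H cond4 (@Gpr H).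
Proof.
  intros h5 a. destruct (L_2_layers a (L_5_2 hacc h5 a)) as [n [u [hn [e hg]]]].
  destruct n as [|n]. lia.
  rewrite prod1n_shift in e. rewrite prod1n_shift in hg. rewrite pw_1 in e.
  set (v := fun i => u (S i)) in *.
  set (d := prod1n v n) in *.
  set (b := prod1n (fun i => pw (v i) (S i)) n) in *.
  assert (hbd : dvd b (pw d (S n))).
  { unfold b, d. rewrite <- prod1n_pw. apply prod1n_dvd_mono. intros i hi. apply pw_le. lia. }
  exists b, (u 1). repeat split.
  - eapply Gpr_dvd. exact hg. apply dvd_mulr.
  - intros x xb xc. assert (gx : Gpr x). { eapply Gpr_dvd; [|exact xc]. eapply Gpr_dvd. exact hg. apply dvd_mulr. }
    apply (Gpr_sq _ _ hg). apply dvd_mul; auto.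
    apply (gx d (S n)). lia. eapply dvd_trans; [exact xb|exact hbd].
  - rewrite e. apply mmulC.
  - exists d. split. eapply Gpr_dvd. exact hg. apply dvd_mull. split.
    + unfold b. rewrite (prod1n_ext _ (fun i => pw (v i) (i - 1) ** pw (v i) 2)).
      rewrite prod1n_mul, prod1n_pw. apply dvd_mull.
      intros i hi. rewrite <- pw_add. f_equal. lia.
    + exists (S n). split. lia. exact hbd.
Qed.

Lemma L_5_5' {H : CCMonoid} (a : H) : cond5 H Gpr a -> cond5' H Gpr a.
Proof.
  intros [b [c [hc [e [n [hn hd]]]]]]. exists b, c. repeat split; auto.
  intros d hd' da. apply (hd' c n); auto. eapply dvd_trans; eauto.
Qed.

Lemma L_4_4' {H : CCMonoid} (a : H) : cond4 H Gpr a -> cond4' H Gpr a.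
Proof.
  intros [b [c [hc [hr [e [d [hd [d2 [n [hn bd]]]]]]]]]]. exists b, c. repeat split; auto.
  intros d' hd' db. eapply dvd_trans; [|exact d2]. apply pw_dvd.
  apply (hd' d n); auto. eapply dvd_trans; eauto.
Qed.

Lemma mono1 {H : CCMonoid} (P Q : H -> Prop) a : (forall x, P x -> Q x) -> cond1 H P a -> cond1 H Q a.
Proof. intros hPQ [n [s [h1 [h2 [h3 h4]]]]]. exists n, s. repeat split; auto. Qed.
Lemma mono2 {H : CCMonoid} (P Q : H -> Prop) a : (forall x, P x -> Q x) -> cond2 H P a -> cond2 H Q a.
Proof. intros hPQ [n [s [h1 [h2 [h3 h4]]]]]. exists n, s. repeat split; auto. Qed.
Lemma mono5 {H : CCMonoid} (P Q : H -> Prop) a : (forall x, P x -> Q x) -> cond5 H P a -> cond5 H Q a.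
Proof. intros hPQ [b [c [h1 h2]]]. exists b, c. split; auto. Qed.
Lemma mono4 {H : CCMonoid} (P Q : H -> Prop) a : (forall x, P x -> Q x) -> cond4 H P a -> cond4 H Q a.
Proof. intros hPQ [b [c [h1 [h2 [h3 [d [h4 h5]]]]]]]. exists b, c. repeat split; auto.
  exists d. split; auto. Qed.

Lemma nonunit_sqf_div {H : CCMonoid} (hacc : ACCP H) (x : H) :
  ~ unit x -> exists d, Sqf d /\ ~ unit d /\ dvd d x.
Proof.
  induction x as [x IH] using (well_founded_ind (wf_pdiv hacc)). intro nx.
  destruct (classic (Sqf x)) as [sx|nsx].
  - exists x. repeat split; auto. apply dvd_refl.
  - apply NNPP in nsx. destruct nsx as [b [c [nb e]]].
    assert (pb : pdiv b x).
    { split. rewrite e, pw_2, <- mmulA. apply dvd_mulr.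
      intro h. apply nb. rewrite e in h. eapply sq_dvd_unit. exact h. }
    destruct (IH b pb nb) as [d [h1 [h2 h3]]]. exists d. repeat split; auto.
    eapply dvd_trans. exact h3. apply pb.
Qed.

Lemma L_5's_2s {H : CCMonoid} (hacc : ACCP H) :
  holds H cond5' (@Sqf H) -> holds H cond2 (@Sqf H).
Proof.
  intros h5 x. induction x as [x IH] using (well_founded_ind (wf_pdiv hacc)).
  destruct (h5 x) as [b [c [hc [e hall]]]].
  destruct (classic (unit c)) as [uc|nuc].
  - apply cond2_single. apply Sqf_unit. apply NNPP. intro nx.
    destruct (nonunit_sqf_div hacc x nx) as [d [h1 [h2 h3]]].
    apply h2. eapply dvd_unit; [|exact uc]. apply hall; auto.
  - assert (pb : pdiv b x).
    { split. rewrite e. apply dvd_mulr. intro h. apply nuc. rewrite e in h.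
      eapply dvd_self_mul. exact h. }
    rewrite e. apply cond2_extend; auto.
    intros n s hn eb hs. apply hall; auto. rewrite e, eb. apply dvd_mul_l.
    apply dvd_prod1n. lia.
Qed.

Theorem proposition4p6 (H : CCMonoid) (hacc : ACCP H) :
  let R := @Gpr H in
  let Q := @Sqf H in
  (holds H cond1 R -> holds H cond0 R) /\
  (holds H cond2 R -> holds H cond1 R) /\
  (holds H cond2 R <-> holds H cond3 R) /\
  (holds H cond3 R <-> holds H cond6 R) /\
  (holds H cond6 R <-> holds H cond5 R) /\
  (holds H cond5 R -> holds H cond4 R) /\
  (holds H cond5 R -> holds H cond5' R) /\
  (holds H cond4 R -> holds H cond4' R) /\
  (holds H cond1 R -> holds H cond1 Q) /\
  (holds H cond2 R -> holds H cond2 Q) /\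
  (holds H cond5 R -> holds H cond5 Q) /\
  (holds H cond4 R -> holds H cond4 Q) /\
  (holds H cond2 Q -> holds H cond5 Q) /\
  (holds H cond5' Q -> holds H cond2 Q).
Proof.
  intros R Q. unfold R, Q, holds.
  assert (h26 : holds H cond2 (@Gpr H) -> holds H cond6 (@Gpr H)) by (intros h a; apply L_2_6, h).
  assert (h25 : holds H cond2 (@Gpr H) -> holds H cond5 (@Gpr H)) by (intros h a; apply L_2_5, h).
  assert (h36 : holds H cond3 (@Gpr H) -> holds H cond6 (@Gpr H)) by (intros h a; apply L_3_6, h).
  pose proof (L_5_2 hacc) as h52. pose proof (L_6_3 hacc) as h63. pose proof (L_6_5 hacc) as h65.
  unfold holds in *.
  repeat split; intros h a.
  - apply L_1_0, h.
  - apply L_2_1, h.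
  - apply h63. apply h26. exact h.
  - apply h52. apply h65. apply h36. exact h.
  - apply h36. exact h.
  - apply h63. exact h.
  - apply h65. exact h.
  - apply h26. apply h52. exact h.
  - apply (L_5_4 hacc). exact h.
  - apply L_5_5', h.
  - apply L_4_4', h.
  - eapply mono1. apply Gpr_Sqf. apply h.
  - eapply mono2. apply Gpr_Sqf. apply h.
  - eapply mono5. apply Gpr_Sqf. apply h.
  - eapply mono4. apply Gpr_Sqf. apply h.
  - apply L_2_5, h.
  - apply (L_5's_2s hacc). exact h.
Qed.
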